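(* Let $\sigma,\eta>0$ and $\mathscr{C}$ be a family of balls as in the context. There exists a constant $C=C(\mathscr{C})>0$ such that $|B|^{1/3}\le C(1+|x_B|)$ for all $B\in\mathscr{C}$.
   Context: Cover: for constants $\sigma,\eta>0$, $\mathscr{C}$ is a family of closed balls in $\mathbb{R}^3$ with $\bigcup_{B\in\mathscr{C}}B=\mathbb{R}^3$ and $|B|\geq 4\pi/3$ for all $B\in\mathscr{C}$, such that (i) each ball in $\mathscr{C}$ intersects at most $\sigma$ balls in $\mathscr{C}$, and (ii) if $B,B'\in\mathscr{C}$ intersect then $\eta^{-1}\le |B|^{1/3}/|B'|^{1/3}\le\eta$. Here $|B|$ is the volume and $x_B$ the center of $B$. *)

(* Defs.v *)
From HB Require Import structures.
From mathcomp Require Import all_boot all_order all_algebra.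
From mathcomp Require Import all_classical all_reals all_analysis.
Set Implicit Arguments. Unset Strict Implicit. Unset Printing Implicit Defensive.
Import Order.TTheory GRing.Theory Num.Theory.
Local Open Scope ring_scope.
Local Open Scope classical_set_scope.

Definition point (R : realType) := 'rV[R]_3.

Definition enorm (R : realType) (x : point R) : R :=
  Num.sqrt (\sum_(i < 3) (x ord0 i) ^+ 2).

Definition ball3 (R : realType) := (point R * R)%type.

Definition bcenter (R : realType) (B : ball3 R) : point R := B.1.
Definition bradius (R : realType) (B : ball3 R) : R := B.2.

Definition cball (R : realType) (B : ball3 R) : set (point R) :=
  [set y | enorm (y - bcenter B) <= bradius B].

Definition vol (R : realType) (B : ball3 R) : R :=
  4 / 3 * pi * bradius B ^+ 3.

Definition intersect (R : realType) (B B' : ball3 R) : Prop :=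
  cball B `&` cball B' !=set0.

Definition is_cover (R : realType) (sigma eta : R) (C : set (ball3 R)) : Prop :=
  (forall B, C B -> 0 < bradius B) /\
  (forall y : point R, exists2 B, C B & cball B y) /\
  (forall B, C B -> 4 / 3 * pi <= vol B) /\
  (* (i) each ball in C intersects at most sigma balls in C *)
  (forall B, C B -> forall s : seq (ball3 R), uniq s ->
      (forall B', B' \in s -> C B' /\ intersect B B') -> (size s)%:R <= sigma) /\
  (* (ii) neighbouring balls have comparable size *)
  (forall B B', C B -> C B' -> intersect B B' ->
      eta^-1 <= vol B `^ (3^-1) / vol B' `^ (3^-1) <= eta).

(* Main.v *)
Require Import Defs.
From HB Require Import structures.
From mathcomp Require Import all_boot all_order all_algebra.
From mathcomp Require Import all_classical all_reals all_analysis.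
From mathcomp Require Import lra.
Import Order.TTheory GRing.Theory Num.Theory.
Local Open Scope ring_scope.

Lemma cube_le (R : realType) (x y : R) : 0 <= x -> 0 <= y -> x <= y ^+ 3 ->
  x `^ (3^-1) <= y.
Proof.
move=> x0 y0 xy.
have h : x `^ (3^-1) <= (y ^+ 3) `^ (3^-1).
  apply: ge0_ler_powR => //; rewrite ?nnegrE ?invr_ge0 ?exprn_ge0 //.
apply: (le_trans h); rewrite -powR_mulrn // -powRrM mulfV ?powRr1 //.
Qed.

Lemma enorm_ge0 (R : realType) (x : Defs.point R) : 0 <= enorm x.
Proof. exact: sqrtr_ge0. Qed.

Lemma enormN (R : realType) (x : Defs.point R) : enorm (0 - x) = enorm x.
Proof. by rewrite /enorm; congr Num.sqrt; apply: eq_bigr => i _; rewrite !mxE sub0r sqrrN. Qed.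

Lemma enormB (R : realType) (x y : Defs.point R) : enorm (x - y) = enorm (y - x).
Proof. by rewrite /enorm; congr Num.sqrt; apply: eq_bigr => i _; rewrite !mxE -opprB sqrrN. Qed.

Theorem corollary3p3 (R : realType) (sigma eta : R) (C : set (ball3 R)) :
  0 < sigma -> 0 < eta -> is_cover sigma eta C ->
  exists2 K : R, 0 < K &
    forall B, C B -> vol B `^ (3^-1) <= K * (1 + enorm (bcenter B)).
Proof.
move=> s0 e0 [rpos [cov [volge [_ ratio]]]].
have [B0 CB0 inB0] := cov 0.
have pi4 : pi <= 4 :> R.
  have [/andP[_ h] _] := pihalf_02_cos_pihalf R.
  rewrite ler_pdivrMr // in h; lra.
have volpos : forall B, C B -> 0 < vol B.
  move=> B CB; apply: lt_le_trans (volge B CB).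
  by rewrite mulr_gt0 ?pi_gt0.
exists (Num.max (eta * vol B0 `^ 3^-1) 2).
  by rewrite lt_max orbC ltr0n.
move=> B CB.
have rB := rpos B CB.
have vB : vol B `^ 3^-1 <= 2 * bradius B.
  apply: cube_le; first exact: ltW (volpos B CB).
    by rewrite mulr_ge0 // ltW.
  rewrite /vol exprMn; apply: ler_wpM2r; first by rewrite exprn_ge0 // ltW.
  have := pi_ge0 R; lra.
have nx := @enorm_ge0 R (bcenter B).
set M := Num.max _ _.
have M2 : 2 <= M by rewrite le_max lexx orbT.
have M1 : eta * vol B0 `^ 3^-1 <= M by rewrite le_max lexx.
case: (leP (enorm (bcenter B)) (bradius B)) => h.
  have inter : intersect B B0.
    by exists 0; split => //; rewrite /cball /= enormN.
  have [_ ] := andP (ratio B B0 CB CB0 inter).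
  rewrite ler_pdivrMr ?powR_gt0 ?volpos // => hv.
  apply: (le_trans hv); apply: (le_trans M1).
  have : 0 <= M by apply: le_trans M2.
  move=> M0; nra.
apply: (le_trans vB); nra.
Qed.
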